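(* Let $G:\mathcal{A}\to\mathcal{B}$ be a discrete opfibration. If $\mathcal{B}$ is quasi-Gröbner, then $\mathcal{A}$ is quasi-Gröbner.
   Context: A functor $G:\mathcal{A}\to\mathcal{B}$ is a discrete opfibration if for every object $a$ of $\mathcal{A}$ and every morphism $g:G(a)\to b$ in $\mathcal{B}$ there is a unique morphism $f$ out of $a$ with $G(f)=g$. Quasi-Gröbner: for a small category $\mathcal{C}$ and object $c$, an admissible order on morphisms out of $c$ is a choice of well-orders on each $\mathrm{Hom}(c,c')$ such that $f\prec f'$ implies $g\circ f\prec g\circ f'$ for all $g$; the preorder $f\le g$ iff $g=h\circ f$ for some $h$ gives a poset $|c/\mathcal{C}|$; a poset is Noetherian if every sequence $x_1,x_2,\dots$ has $i<j$ with $x_i\le x_j$. $\mathcal{C}$ is Gröbner if for every object $c$: (G1) morphisms out of $c$ admit an admissible order and (G2) $|c/\mathcal{C}|$ is Noetherian. A functor $\Phi:\mathcal{C}\to\mathcal{D}$ has property (F) if for every object $d$ of $\mathcal{D}$ there are finitely many objects $c_i$ and morphisms $f_i:d\to\Phi(c_i)$ such that every $f:d\to\Phi(c)$ factors as $\Phi(g)\circ f_i$ for some $i$ and $g:c_i\to c$. $\mathcal{D}$ is quasi-Gröbner if there are a Gröbner $\mathcal{C}$ and an essentially surjective functor $\mathcal{C}\to\mathcal{D}$ with property (F). *)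

(* Defs.v *)
From Stdlib Require Import List Arith.
Import ListNotations.
Set Implicit Arguments.

Record Category := {
  Obj : Type;
  Hom : Obj -> Obj -> Type;
  id : forall a, Hom a a;
  comp : forall a b c, Hom b c -> Hom a b -> Hom a c;
  comp_id_l : forall a b (f : Hom a b), comp (id b) f = f;
  comp_id_r : forall a b (f : Hom a b), comp f (id a) = f;
  comp_assoc : forall a b c d (f : Hom a b) (g : Hom b c) (h : Hom c d),
      comp h (comp g f) = comp (comp h g) f
}.

Arguments id {_} a.
Arguments comp {_ a b c} g f.

Record Functor (C D : Category) := {
  fobj : Obj C -> Obj D;
  fmap : forall a b, Hom C a b -> Hom D (fobj a) (fobj b);
  fmap_id : forall a, fmap a a (@id C a) = @id D (fobj a);
  fmap_comp : forall a b c (f : Hom C a b) (g : Hom C b c),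
      fmap a c (@comp C a b c g f) = @comp D _ _ _ (fmap b c g) (fmap a b f)
}.

Arguments fobj {_ _} _ _.
Arguments fmap {_ _} _ {_ _} _.

(* The equation
   G f = g is stated as equality of morphisms out of G a, i.e. of
   dependent pairs (codomain, morphism). *)
Definition discrete_opfibration (A B : Category) (G : Functor A B) : Prop :=
  forall (a : Obj A) (b : Obj B) (g : Hom B (fobj G a) b),
    (exists (a' : Obj A) (f : Hom A a a'),
        existT (fun y => Hom B (fobj G a) y) (fobj G a') (fmap G f)
        = existT (fun y => Hom B (fobj G a) y) b g)
    /\
    (forall (a1 a2 : Obj A) (f1 : Hom A a a1) (f2 : Hom A a a2),
        existT (fun y => Hom B (fobj G a) y) (fobj G a1) (fmap G f1)
          = existT (fun y => Hom B (fobj G a) y) b g ->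
        existT (fun y => Hom B (fobj G a) y) (fobj G a2) (fmap G f2)
          = existT (fun y => Hom B (fobj G a) y) b g ->
        existT (fun y => Hom A a y) a1 f1 = existT (fun y => Hom A a y) a2 f2).

Definition well_order (X : Type) (lt : X -> X -> Prop) : Prop :=
  (forall x, ~ lt x x) /\
  (forall x y z, lt x y -> lt y z -> lt x z) /\
  (forall x y, lt x y \/ x = y \/ lt y x) /\
  well_founded lt.

Definition admissible_order (C : Category) (c : Obj C)
    (lt : forall c' : Obj C, Hom C c c' -> Hom C c c' -> Prop) : Prop :=
  (forall c', well_order (lt c')) /\
  (forall c' c'' (f f' : Hom C c c') (g : Hom C c' c''),
      lt c' f f' -> lt c'' (comp g f) (comp g f')).

Definition Out (C : Category) (c : Obj C) : Type := { c' : Obj C & Hom C c c' }.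

(* The preorder f <= g iff g = h o f for some h; |c/C| is its poset quotient. *)
Definition out_le (C : Category) (c : Obj C) (p q : Out C c) : Prop :=
  exists h : Hom C (projT1 p) (projT1 q), projT2 q = comp h (projT2 p).

(* Noetherianity of |c/C|: every sequence x_1, x_2, ... has i < j with
   x_i <= x_j (checked on representatives). *)
Definition noetherian_under (C : Category) (c : Obj C) : Prop :=
  forall x : nat -> Out C c, exists i j, i < j /\ @out_le C c (x i) (x j).

Definition Groebner (C : Category) : Prop :=
  forall c : Obj C,
    (exists lt, @admissible_order C c lt) /\ @noetherian_under C c.

Definition is_iso (C : Category) (a b : Obj C) (f : Hom C a b) : Prop :=
  exists g : Hom C b a, comp g f = id a /\ comp f g = id b.

Definition ess_surj (C D : Category) (F : Functor C D) : Prop :=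
  forall d : Obj D, exists (c : Obj C) (f : Hom D d (fobj F c)), @is_iso D d (fobj F c) f.

Definition property_F (C D : Category) (F : Functor C D) : Prop :=
  forall d : Obj D,
    exists l : list { ci : Obj C & Hom D d (fobj F ci) },
      forall (c : Obj C) (f : Hom D d (fobj F c)),
        exists p, In p l /\
          exists g : Hom C (projT1 p) c, f = comp (fmap F g) (projT2 p).

Definition quasi_Groebner (D : Category) : Prop :=
  exists (C : Category) (F : Functor C D),
    Groebner C /\ @ess_surj C D F /\ @property_F C D F.

(* Main.v *)
Require Import Defs.
From Stdlib Require Import List Wellfounded Eqdep ProofIrrelevance.
Import ListNotations.

Lemma cA {X : Category} {a b c d : Obj X} (f : Hom X a b) (g : Hom X b c) (h : Hom X c d) :
  comp h (comp g f) = comp (comp h g) f.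
Proof. apply comp_assoc. Qed.
Lemma cL {X : Category} {a b : Obj X} (f : Hom X a b) : comp (id b) f = f.
Proof. apply comp_id_l. Qed.
Lemma cR {X : Category} {a b : Obj X} (f : Hom X a b) : comp f (id a) = f.
Proof. apply comp_id_r. Qed.

Definition eq_hom {X : Category} {x y : Obj X} (e : x = y) : Hom X x y :=
  match e in _ = y return Hom X x y with eq_refl => id x end.

Lemma eq_hom_iso {X : Category} {x y : Obj X} (e : x = y) : is_iso _ _ _ (eq_hom e).
Proof. destruct e. exists (id x). simpl. split; apply cL. Qed.

Lemma sig_hom_eq (X : Category) (x : Obj X) (p q : {y : Obj X & Hom X x y}) :
  p = q -> exists e : projT1 p = projT1 q, comp (eq_hom e) (projT2 p) = projT2 q.
Proof. intros ->. exists eq_refl. simpl. apply cL. Qed.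

Lemma hom_eq_sig (X : Category) (x y1 y2 : Obj X) (e : y1 = y2)
  (u : Hom X x y1) (v : Hom X x y2) :
  comp (eq_hom e) u = v -> existT (fun y => Hom X x y) y1 u = existT _ y2 v.
Proof. destruct e. simpl. rewrite cL. intros ->. reflexivity. Qed.

Lemma lift_factor (A B : Category) (G : Functor A B) : discrete_opfibration G ->
  forall a a1 a2 (f1 : Hom A a a1) (f2 : Hom A a a2) (b : Hom B (fobj G a1) (fobj G a2)),
  comp b (fmap G f1) = fmap G f2 -> exists k : Hom A a1 a2, fmap G k = b /\ comp k f1 = f2.
Proof.
  intros HG a a1 a2 f1 f2 b Hb.
  destruct (HG a1 _ b) as [[a'' [l Hl]] _].
  destruct (sig_hom_eq _ _ _ _ Hl) as [e He]. simpl in e, He.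
  destruct (HG a _ (fmap G f2)) as [_ Hu].
  assert (H1 : existT (fun y => Hom B (fobj G a) y) (fobj G a'') (fmap G (comp l f1))
               = existT _ (fobj G a2) (fmap G f2)).
  { apply (hom_eq_sig _ _ _ _ e). rewrite fmap_comp, cA, He. exact Hb. }
  specialize (Hu _ _ _ _ H1 eq_refl).
  pose proof (f_equal (@projT1 _ _) Hu) as Ea. simpl in Ea. subst a''.
  apply Eqdep.EqdepTheory.inj_pair2 in Hu.
  rewrite (Eqdep.EqdepTheory.UIP_refl _ _ e) in He. simpl in He. rewrite cL in He.
  exists l. split; assumption.
Qed.

Record obj' (A B C : Category) (G : Functor A B) (F : Functor C B) : Type := mkO {
  oc : Obj C; oa : Obj A; ophi : Hom B (fobj G oa) (fobj F oc); oiso : is_iso _ _ _ ophi }.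
Arguments obj' {A B C} G F.
Arguments mkO {A B C G F}.
Arguments oc {A B C G F}. Arguments oa {A B C G F}.
Arguments ophi {A B C G F}. Arguments oiso {A B C G F}.

Record hom' (A B C : Category) (G : Functor A B) (F : Functor C B) (x y : obj' G F) : Type := mkH {
  hg : Hom C (oc x) (oc y); hf : Hom A (oa x) (oa y);
  hcomm : comp (ophi y) (fmap G hf) = comp (fmap F hg) (ophi x) }.
Arguments hom' {A B C G F} x y.
Arguments mkH {A B C G F x y}.
Arguments hg {A B C G F x y}. Arguments hf {A B C G F x y}. Arguments hcomm {A B C G F x y}.

Lemma hom'_eq A B C (G : Functor A B) (F : Functor C B) (x y : obj' G F) (p q : hom' x y) :
  hg p = hg q -> hf p = hf q -> p = q.
Proof.
  destruct p as [g1 f1 h1], q as [g2 f2 h2]; simpl; intros -> ->.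
  f_equal; apply proof_irrelevance.
Qed.

Definition idH A B C (G : Functor A B) (F : Functor C B) (x : obj' G F) : hom' x x.
Proof.
  refine (mkH (id (oc x)) (id (oa x)) _).
  abstract (rewrite !fmap_id, cL, cR; reflexivity).
Defined.

Definition compH A B C (G : Functor A B) (F : Functor C B) (x y z : obj' G F)
  (q : hom' y z) (p : hom' x y) : hom' x z.
Proof.
  refine (mkH (comp (hg q) (hg p)) (comp (hf q) (hf p)) _).
  abstract (rewrite !fmap_comp, cA, (hcomm q), <- cA, (hcomm p), cA; reflexivity).
Defined.

Definition Cp A B C (G : Functor A B) (F : Functor C B) : Category.
Proof.
  refine (@Build_Category (obj' G F) (@hom' A B C G F) (@idH A B C G F) (@compH A B C G F) _ _ _).
  - intros a b f; apply hom'_eq; simpl; apply cL.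
  - intros a b f; apply hom'_eq; simpl; apply cR.
  - intros a b c d f g h; apply hom'_eq; simpl; apply cA.
Defined.

Definition Fp A B C (G : Functor A B) (F : Functor C B) : Functor (Cp A B C G F) A.
Proof.
  refine (@Build_Functor (Cp A B C G F) A (fun x => oa x) (fun x y p => hf p) _ _).
  - intros; reflexivity.
  - intros; reflexivity.
Defined.

Lemma list_choice (T U : Type) (R : T -> U -> Prop) (l : list T) :
  (forall p, In p l -> exists q, R p q) ->
  exists l', forall p, In p l -> exists q, In q l' /\ R p q.
Proof.
  induction l as [|t l IH]; intros H.
  - exists []. intros p [].
  - destruct (H t (or_introl eq_refl)) as [q Hq].
    destruct IH as [l' Hl']. { intros p Hp; apply H; right; exact Hp. }
    exists (q :: l'). intros p [<-|Hp].
    + exists q; split; [left; reflexivity | exact Hq].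
    + destruct (Hl' p Hp) as [q' [H1 H2]]. exists q'; split; [right; exact H1 | exact H2].
Qed.

Theorem lemma1p18 (A B : Category) (G : Functor A B) :
  discrete_opfibration G -> quasi_Groebner B -> quasi_Groebner A.
Proof.
  intros HG [C [F [HC [HF HPF]]]].
  exists (Cp A B C G F), (Fp A B C G F).
  split; [|split].
  - intros X. destruct (HC (oc X)) as [[lt [Hwo Hadm]] Hnoeth].
    assert (hg_inj : forall Y (p q : hom' X Y), hg p = hg q -> p = q).
    { intros Y p q Hpq. apply hom'_eq; [exact Hpq|].
      destruct (oiso Y) as [psi [Hp1 Hp2]].
      assert (E : fmap G (hf p) = fmap G (hf q)).
      { rewrite <- (cL (fmap G (hf p))), <- (cL (fmap G (hf q))), <- Hp1, <- !cA,
          (hcomm p), (hcomm q), Hpq. reflexivity. }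
      destruct (HG (oa X) _ (fmap G (hf q))) as [_ Hu].
      assert (H1 : existT (fun y => Hom B (fobj G (oa X)) y) (fobj G (oa Y)) (fmap G (hf p))
               = existT _ (fobj G (oa Y)) (fmap G (hf q))) by (rewrite E; reflexivity).
      specialize (Hu _ _ _ _ H1 eq_refl).
      apply Eqdep.EqdepTheory.inj_pair2 in Hu. exact Hu. }
    split.
    + exists (fun Y (p q : hom' X Y) => lt (oc Y) (hg p) (hg q)). split.
      * intros Y. destruct (Hwo (oc Y)) as [Hirr [Htr [Htot Hwf]]].
        split; [|split; [|split]].
        -- intros p; apply Hirr.
        -- intros p q r; apply Htr.
        -- intros p q. destruct (Htot (hg p) (hg q)) as [h|[h|h]]; auto.
           right; left; apply hg_inj; exact h.
        -- apply (wf_inverse_image _ _ _ (fun p : hom' X Y => hg p)); exact Hwf.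
      * intros Y Z p q r H. simpl. apply Hadm. exact H.
    + intros x.
      destruct (Hnoeth (fun n => existT (fun c' => Hom C (oc X) c')
                                  (oc (projT1 (x n))) (hg (projT2 (x n)))))
        as [i [j [Hij [h Hh]]]].
      simpl in h, Hh. exists i, j. split; [exact Hij|].
      unfold out_le.
      revert h Hh. destruct (x i) as [Yi pi]; destruct (x j) as [Yj pj]; simpl.
      intros h Hh.
      destruct (oiso Yj) as [psi [Hp1 Hp2]].
      destruct (lift_factor A B G HG _ _ _ (hf pi) (hf pj) (comp psi (comp (fmap F h) (ophi Yi))))
        as [k [Hk1 Hk2]].
      { rewrite <- !cA, (hcomm pi), (cA (ophi X)), <- fmap_comp, <- Hh, <- (hcomm pj),
          cA, Hp1, cL. reflexivity. }
      assert (Hc : comp (ophi Yj) (fmap G k) = comp (fmap F h) (ophi Yi)).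
      { rewrite Hk1, cA, Hp2, cL. reflexivity. }
      exists (mkH h k Hc). apply hom'_eq; simpl; [exact Hh | symmetry; exact Hk2].
  - intros a. destruct (HF (fobj G a)) as [c [phi Hphi]].
    exists (mkO c a phi Hphi), (id a). exists (id a). split; apply cL.
  - intros a. destruct (HPF (fobj G a)) as [l Hl].
    destruct (list_choice _ _
      (fun (p : {ci : Obj C & Hom B (fobj G a) (fobj F ci)})
           (q : {X : obj' G F & Hom A a (oa X)}) =>
         exists (a' : Obj A) (l' : Hom A a a') (e : fobj G a' = fobj F (projT1 p)),
           comp (eq_hom e) (fmap G l') = projT2 p /\
           q = existT _ (mkO (projT1 p) a' (eq_hom e) (eq_hom_iso e)) l') l)
      as [l' Hl'].
    { intros [c f] _. destruct (HG a _ f) as [[a' [l0 H]] _].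
      destruct (sig_hom_eq _ _ _ _ H) as [e He]. simpl in *.
      eexists; exists a', l0, e; split; [exact He | reflexivity]. }
    exists l'. intros Y f.
    destruct (oiso Y) as [psi [Hp1 Hp2]].
    destruct (Hl (oc Y) (comp (ophi Y) (fmap G f))) as [p [Hp [g Hg]]].
    destruct (Hl' p Hp) as [q [Hq [a' [l0 [e [He Eq]]]]]]. subst q.
    exists (existT _ (mkO (projT1 p) a' (eq_hom e) (eq_hom_iso e)) l0).
    split; [exact Hq|]. simpl.
    destruct (lift_factor A B G HG _ _ _ l0 f (comp psi (comp (fmap F g) (eq_hom e)))) as [k [Hk1 Hk2]].
      { rewrite <- !cA, He, <- Hg, cA. etransitivity; [apply (f_equal (fun t => comp t (fmap G f))); exact Hp1 | apply cL]. }
    assert (Hc : comp (ophi Y) (fmap G k) = comp (fmap F g) (eq_hom e)).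
    { rewrite Hk1, cA, Hp2, cL. reflexivity. }
    exists (@mkH _ _ _ _ _ (mkO (projT1 p) a' (eq_hom e) (eq_hom_iso e)) Y g k Hc).
    simpl. symmetry. exact Hk2.
Qed.
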